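(* For classes $[\mathcal{K}],[\mathcal{J}]\in\mathbb{P}(\mathcal{C})$: (1) $\Delta([\mathcal{K}],[\mathcal{J}])=1$ if and only if $\delta([\mathcal{K}],[\mathcal{J}])=1$; (2) if $\delta([\mathcal{K}],[\mathcal{J}])=2$, then $\Delta([\mathcal{K}],[\mathcal{J}])=2$.
   Context: $\mathcal{C}$ is the smooth knot concordance group; $d(\mathcal{K},\mathcal{J})=g_4(\mathcal{K}\,\#\,-\mathcal{J})$, $g_4$ the smooth four-genus. Let $\mathcal{C}^\circ=\mathcal{C}\setminus\{0\}$; $\mathcal{K}\sim'\mathcal{J}$ if there exist $\mathcal{M}\in\mathcal{C}$ and $r,s\in\mathbb{Z}$ with $\mathcal{K}=r\mathcal{M}$, $\mathcal{J}=s\mathcal{M}$; $\sim$ is the equivalence relation generated by $\sim'$; $\mathbb{P}(\mathcal{C})=\mathcal{C}^\circ/\sim$. Define $\delta([\mathcal{K}],[\mathcal{J}])=\min\{d(\mathcal{K}',\mathcal{J}'):\mathcal{K}'\in[\mathcal{K}],\mathcal{J}'\in[\mathcal{J}]\}$ and $\Delta([\mathcal{K}],[\mathcal{J}])=\min\sum_{i=0}^{n-1}\delta([\mathcal{K}_i],[\mathcal{K}_{i+1}])$ over all finite sequences of classes with $[\mathcal{K}_0]=[\mathcal{K}]$, $[\mathcal{K}_n]=[\mathcal{J}]$. *)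

(* Defs.v *)
From HB Require Import structures.
From mathcomp Require Import all_boot all_order all_algebra.
From mathcomp Require Import boolp.
From Stdlib Require Import Relations.
Set Implicit Arguments. Unset Strict Implicit. Unset Printing Implicit Defensive.
Import GRing.Theory.
Local Open Scope ring_scope.

Section ProjConc.
Variables (C : zmodType) (g4 : C -> nat).

(* d(K,J) = g4(K # -J) *)
Definition dist (K J : C) : nat := g4 (K - J).

Definition sim' (K J : C) : Prop :=
  exists (M : C) (r s : int), K = M *~ r /\ J = M *~ s.

Definition sim'_nz (K J : C) : Prop := K != 0 /\ J != 0 /\ sim' K J.
Definition sim (K J : C) : Prop :=
  K != 0 /\ J != 0 /\ clos_refl_sym_trans C sim'_nz K J.

(* a classical minimum of a set of naturals (0 if empty; never empty below) *)
Definition natmin (P : nat -> Prop) : nat :=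
  match pselect (exists n, P n) with
  | left ex => ex_minn (P := fun n => `[< P n >]) (let: ex_intro n Pn := ex in ex_intro _ n (asboolT Pn))
  | right _ => 0%N
  end.

Definition delta (K J : C) : nat :=
  natmin (fun n => exists K' J', sim K K' /\ sim J J' /\ n = dist K' J').

(* Delta([K],[J]) = min over finite sequences of classes [K_0]=[K], ..., [K_n]=[J]
   of sum_i delta([K_i],[K_{i+1}]); a sequence of classes is given by
   representatives K0 :: ks, all in C°. *)
Definition Delta (K J : C) : nat :=
  natmin (fun m => exists (K0 : C) (ks : seq C),
    sim K K0 /\ (forall x, x \in ks -> x != 0) /\ sim (last K0 ks) J /\
    m = sumn (pairmap delta K0 ks)).

End ProjConc.

(* Main.v *)
Require Import Defs.
From HB Require Import structures.
From mathcomp Require Import all_boot all_order all_algebra.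
From mathcomp Require Import boolp.
From Stdlib Require Import Relations.
Import GRing.Theory.
Local Open Scope ring_scope.

Lemma natmin_le (P : nat -> Prop) m : P m -> (natmin P <= m)%N.
Proof.
move=> Pm; rewrite /natmin; case: pselect => [ex|nex]; last by [].
case: ex_minnP => n _ Hmin; exact: Hmin (asboolT Pm).
Qed.

Lemma natmin_P (P : nat -> Prop) : (exists n, P n) -> P (natmin P).
Proof.
move=> ex; rewrite /natmin; case: pselect => [ex'|nex]; last by case: (nex ex).
by case: ex_minnP => n /asboolP.
Qed.

Section S.
Variables (C : zmodType) (g4 : C -> nat).
Hypothesis g4_eq0 : forall x : C, g4 x = 0%N <-> x = 0.

Lemma sim_refl (a : C) : a != 0 -> sim a a.
Proof. by move=> a0; split; [|split]; [..|apply: rst_refl]. Qed.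

Lemma sim_sym {a b : C} : sim a b -> sim b a.
Proof. by case=> a0 [b0 h]; split; [|split]; [..|apply: rst_sym]. Qed.

Lemma sim_trans {a b c : C} : sim a b -> sim b c -> sim a c.
Proof.
case=> a0 [b0 h] [_ [c0 h']]; split; [|split]; [..|apply: rst_trans h h'] => //.
Qed.

Lemma delta_sim {a a' b b' : C} : sim a a' -> sim b b' ->
  delta g4 a b = delta g4 a' b'.
Proof.
move=> ha hb; rewrite /delta; congr natmin; apply/funext => n; apply/propext.
split.
  move=> [K' [J' [h1 [h2 ->]]]]; exists K', J'.
  split; first exact: sim_trans (sim_sym ha) h1.
  split; last by []. exact: sim_trans (sim_sym hb) h2.
move=> [K' [J' [h1 [h2 ->]]]]; exists K', J'.
split; first exact: sim_trans ha h1.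
split; last by []. exact: sim_trans hb h2.
Qed.

Lemma delta0 {a b : C} : a != 0 -> b != 0 -> delta g4 a b = 0%N -> sim a b.
Proof.
move=> a0 b0 h.
have ex : exists n, exists K' J', sim a K' /\ sim b J' /\ n = dist g4 K' J'.
  by exists (dist g4 a b), a, b; split; [|split]; [apply: sim_refl..|].
have := natmin_P _ ex; rewrite -/(delta g4 a b) h.
case=> K' [J' [h1 [h2 /esym/g4_eq0/eqP]]]; rewrite subr_eq0 => /eqP e.
subst J'; exact: sim_trans h1 (sim_sym h2).
Qed.

Lemma delta_of_sim (a b : C) : sim a b -> delta g4 a b = 0%N.
Proof.
move=> h; apply/eqP; rewrite -leqn0.
have b0 : b != 0 by case: h => _ [].
apply: (@natmin_le _ 0%N); exists b, b; split; [|split] => //; first exact: sim_refl.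
by rewrite /dist subrr; apply/esym/g4_eq0.
Qed.

Lemma chain (ks : seq C) (K0 : C) : K0 != 0 -> (forall x, x \in ks -> x != 0) ->
  (sumn (pairmap (delta g4) K0 ks) = 0%N -> sim K0 (last K0 ks)) /\
  (sumn (pairmap (delta g4) K0 ks) = 1%N -> delta g4 K0 (last K0 ks) = 1%N).
Proof.
elim: ks K0 => [|x ks IH] K0 K00 hks /=.
  by split=> // _; apply: sim_refl.
have x0 : x != 0 by apply: hks; rewrite inE eqxx.
have hks' : forall y, y \in ks -> y != 0 by move=> y hy; apply: hks; rewrite inE hy orbT.
have [IH0 IH1] := IH x x0 hks'.
have hl : last x ks != 0.
  by have := mem_last x ks; rewrite inE => /orP[/eqP ->|/hks'].
split.
  move=> /eqP; rewrite addn_eq0 => /andP[/eqP h1 /eqP h2].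
  exact: sim_trans (delta0 K00 x0 h1) (IH0 h2).
case E: (delta g4 K0 x) => [|[|m]] /=.
- rewrite add0n => h; rewrite -(IH1 h); apply: delta_sim (delta0 K00 x0 E) _.
  exact: sim_refl hl.
- move=> /eqP; rewrite add1n eqSS => /eqP h; rewrite -E.
  apply: esym; apply: delta_sim (IH0 h); exact: sim_refl.
- by rewrite !addSn.
Qed.
End S.

Theorem theorem6p3 (C : zmodType) (g4 : C -> nat)
  (g4_eq0 : forall x : C, g4 x = 0%N <-> x = 0)
  (g4_opp : forall x : C, g4 (- x) = g4 x)
  (g4_add : forall x y : C, (g4 (x + y)%R <= g4 x + g4 y)%N)
  (K J : C) (HK : K != 0) (HJ : J != 0) :
  (Delta g4 K J = 1%N <-> delta g4 K J = 1%N) /\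
  (delta g4 K J = 2%N -> Delta g4 K J = 2%N).
Proof.
have Dle : (Delta g4 K J <= delta g4 K J)%N.
  apply: natmin_le; exists K, [:: J]; split; first exact: sim_refl.
  split; first by move=> x; rewrite inE => /eqP ->.
  split; first exact: sim_refl.
  by rewrite /= addn0.
have ex : exists m, exists (K0 : C) (ks : seq C),
    sim K K0 /\ (forall x, x \in ks -> x != 0) /\ sim (last K0 ks) J /\
    m = sumn (pairmap (delta g4) K0 ks).
  by exists (delta g4 K J), K, [:: J]; split; [exact: sim_refl|split;
    [by move=> x; rewrite inE => /eqP ->|split; [exact: sim_refl|rewrite /= addn0]]].
have [K0 [ks [hK0 [hks [hl hD]]]]] := natmin_P _ ex.
rewrite -/(Delta g4 K J) in hD.
have K00 : K0 != 0 by case: hK0 => _ [].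
have [c0 c1] := @chain C g4 g4_eq0 ks K0 K00 hks.
have D0 : Delta g4 K J = 0%N -> delta g4 K J = 0%N.
  move=> E; rewrite E in hD; have hs := c0 (esym hD).
  exact: (@delta_of_sim C g4 g4_eq0 _ _ (sim_trans C hK0 (sim_trans C hs hl))).
have D1 : Delta g4 K J = 1%N -> delta g4 K J = 1%N.
  move=> E; rewrite E in hD; have hs := c1 (esym hD).
  rewrite -hs; apply: (@delta_sim C g4); [exact: hK0|]. by case: hl => a [b c]; split=> //; split=> //; apply: rst_sym.
move: Dle D0 D1; case: (Delta g4 K J) => [|[|[|m]]]; case: (delta g4 K J) => [|[|[|n]]];
  move=> // Dle D0 D1; (try by have := D0 erefl); (try by have := D1 erefl); split => //.
Qed.
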